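(* Let $B$ be a finite brace such that every Sylow subgroup of the additive group $(B,+)$ and every Sylow subgroup of the multiplicative group $(B,\cdot)$ is cyclic. Then $B$ is supersoluble.
   Context: A brace (skew left brace) is a set $B$ with two binary operations $+$ and $\cdot$ (the product written by juxtaposition) such that $(B,+)$ and $(B,\cdot)$ are groups and $a(b+c)=ab-a+ac$ for all $a,b,c\in B$; the two groups have the same identity $0$. For $a,b\in B$ put $\lambda_a(b)=-a+ab$; then $\lambda\colon (B,\cdot)\to\operatorname{Aut}(B,+)$, $a\mapsto\lambda_a$, is a group homomorphism. A subbrace is a subset that is a subgroup of both $(B,+)$ and $(B,\cdot)$. An ideal of $B$ is a subbrace $I$ that is normal in $(B,+)$ and in $(B,\cdot)$ and satisfies $\lambda_b(I)\subseteq I$ for all $b\in B$; then $B/I$ is naturally a brace. $\operatorname{Soc}(B)=\operatorname{Ker}\lambda\cap Z(B,+)$, an ideal. A brace $B$ is supersoluble if there is a finite chain of ideals $\{0\}=I_0\le I_1\le\dots\le I_n=B$ of $B$ such that for each $0\le i<n$, either $(I_{i+1}/I_i,+)$ is infinite cyclic and $I_{i+1}/I_i\le\operatorname{Soc}(B/I_i)$, or $I_{i+1}/I_i$ has prime order. *)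

(* Defs.v *)
From HB Require Import structures.
From mathcomp Require Import all_boot all_order all_algebra all_fingroup all_solvable.
Set Implicit Arguments. Unset Strict Implicit. Unset Printing Implicit Defensive.

(* A (skew left) brace on a finite carrier T.  The additive group has
   operations badd / bneg / bzero, the multiplicative group has
   operations bmul / binv with the SAME identity bzero. *)
Record brace (T : finType) := Brace {
  badd : T -> T -> T;
  bneg : T -> T;
  bzero : T;
  bmul : T -> T -> T;
  binv : T -> T;
  baddA : associative badd;
  badd0 : left_id bzero badd;
  baddN : left_inverse bzero bneg badd;
  bmulA : associative bmul;
  bmul1 : left_id bzero bmul;
  bmulV : left_inverse bzero binv bmul;
  bmulDr : forall a b c,
    bmul a (badd b c) = badd (badd (bmul a b) (bneg a)) (bmul a c)
}.

Definition brace_add (T : finType) (B : brace T) : Type := T.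
Definition brace_mul (T : finType) (B : brace T) : Type := T.
Arguments brace_add {T} B.
Arguments brace_mul {T} B.

Section BraceGroups.
Variables (T : finType) (B : brace T).

HB.instance Definition _ := Finite.on (brace_add B).
HB.instance Definition _ := Finite_isGroup.Build (brace_add B)
  (@baddA _ B) (@badd0 _ B) (@baddN _ B).

HB.instance Definition _ := Finite.on (brace_mul B).
HB.instance Definition _ := Finite_isGroup.Build (brace_mul B)
  (@bmulA _ B) (@bmul1 _ B) (@bmulV _ B).

Local Notation "x + y" := (badd B x y).
Local Notation "- x" := (bneg B x).
Local Notation "0" := (bzero B).
Local Notation "x * y" := (bmul B x y).

Definition blambda (a b : T) : T := - a + a * b.

Definition bzmul (g : T) (z : int) : T :=
  match z with
  | Posz n => iter n (badd B g) 0
  | Negz n => - iter n.+1 (badd B g) 0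
  end.

Definition is_subbrace (I : {set T}) : Prop :=
  [/\ 0 \in I,
      (forall x y, x \in I -> y \in I -> x + y \in I),
      (forall x, x \in I -> - x \in I),
      (forall x y, x \in I -> y \in I -> x * y \in I) &
      (forall x, x \in I -> binv B x \in I)].

Definition is_ideal (I : {set T}) : Prop :=
  [/\ is_subbrace I,
      (forall b x, x \in I -> b + x + - b \in I),
      (forall b x, x \in I -> b * x * binv B b \in I) &
      (forall b x, x \in I -> blambda b x \in I)].

(* Congruence modulo an ideal I in B/I : x + I = y + I *)
Definition bcong (I : {set T}) (x y : T) : Prop := - x + y \in I.

(* J/I (I <= J ideals) has infinite cyclic additive group *)
Definition factor_inf_cyclic (I J : {set T}) : Prop :=
  exists2 g, g \in J &
    (forall x, x \in J -> exists z : int, bcong I (bzmul g z) x) /\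
    (forall z1 z2 : int, bcong I (bzmul g z1) (bzmul g z2) -> z1 = z2).

(* J/I <= Soc(B/I) = Ker lambda /\ Z(B/I,+) *)
Definition factor_in_soc (I J : {set T}) : Prop :=
  forall x, x \in J -> forall y : T,
    bcong I (blambda x y) y /\ bcong I (y + x) (x + y).

Definition factor_prime (I J : {set T}) : Prop :=
  prime (#|J| %/ #|I|).

Definition supersoluble : Prop :=
  exists (n : nat) (I : nat -> {set T}),
    [/\ I 0%N = [set 0], I n = [set: T],
        (forall i, (i <= n)%N -> is_ideal (I i)),
        (forall i, (i < n)%N -> I i \subset I i.+1) &
        (forall i, (i < n)%N ->
           (factor_inf_cyclic (I i) (I i.+1) /\ factor_in_soc (I i) (I i.+1))
           \/ factor_prime (I i) (I i.+1))].

End BraceGroups.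

(* Main.v *)
Require Import Defs.
From HB Require Import structures.
From mathcomp Require Import all_boot all_order all_algebra all_fingroup all_solvable.
From mathcomp Require Import zify.

Module Helpers.
Set Implicit Arguments. Unset Strict Implicit. Unset Printing Implicit Defensive.
Local Open Scope group_scope.


Section Burnside.
Variables (gT : finGroupType) (G P : {group gT}) (p : nat).
Hypotheses (pr_p : prime p) (sylP : p.-Sylow(G) P) (cycP : cyclic P)
  (minp : forall q, prime q -> q %| #|G| -> p <= q).

Lemma sPG : P \subset G. Proof. exact: pHall_sub sylP. Qed.
Lemma abP : abelian P. Proof. exact: cyclic_abelian. Qed.

Lemma normP_cent : 'N_G(P) \subset 'C(P).
Proof.
set N := 'N_G(P).
have sPN : P \subset N by rewrite subsetI sPG normG.
have sPC : P \subset N :&: 'C(P) by rewrite subsetI sPN; exact: abP.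
set d := #|N : N :&: 'C(P)|.
have dAut : d %| #|Aut P|.
  have := cardSg (Aut_conj_aut P N).
  rewrite card_morphim ker_conj_aut /= /d.
  by rewrite setIC -setIA setIid indexgI.
have cop : coprime d p.
  have h1 : d %| #|N : P|.
    by rewrite -(Lagrange_index (subsetIl N 'C(P)) sPC) dvdn_mulr.
  have h2 : #|N : P| %| #|G : P| by apply: indexSg => //; apply: subsetIl.
  have /and3P[_ _ p'i] := sylP.
  have : p^'.-nat d by apply: pnat_dvd (dvdn_trans h1 h2) p'i.
  by rewrite p'natE // coprime_sym prime_coprime.
have dp : d %| p.-1.
  move: dAut; rewrite card_Aut_cyclic // (card_Hall sylP) p_part.
  case e: (logn p #|G|) => [|e'].
    by rewrite expn0 dvdn1 => /eqP ->; rewrite dvd1n.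
  rewrite totient_pfactor // Gauss_dvdl //.
  by apply: coprimeXr.
have dG : d %| #|G|.
  by apply: dvdn_trans (dvdn_indexg _ _) (cardSg (subsetIl G _)).
have d1 : d == 1%N.
  rewrite eqn_leq indexg_gt0 andbT leqNgt; apply/negP => d_gt1.
  have q_pr := pdiv_prime d_gt1.
  have := minp q_pr (dvdn_trans (pdiv_dvd d) dG).
  have : pdiv d <= d by apply: pdiv_leq; apply: ltnW.
  have : d <= p.-1 by apply: dvdn_leq => //; rewrite -subn1 subn_gt0 prime_gt1.
  have := prime_gt1 pr_p. lia.
by move: d1; rewrite indexg_eq1 subsetI => /andP[].
Qed.

Lemma fusion a x : a \in P -> x \in G -> a ^ x \in P -> a ^ x = a.
Proof.
move=> Pa Gx Pax.
set C := 'C_G[a ^ x].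
have sCG : C \subset G by apply: subsetIl.
have cPa : forall b, b \in P -> b \in 'C(P) by apply/subsetP; exact: abP.
have sPC : P \subset C by rewrite subsetI sPG sub_cent1 cPa.
have sPxC : P :^ x \subset C.
  rewrite subsetI conj_subG ?sPG // cent1J conjSg sub_cent1 cPa //.
have syl1 : p.-Sylow(C) P := pHall_subl sPC sCG sylP.
have syl2 : p.-Sylow(C) (P :^ x)%G.
  by apply: pHall_subl sPxC sCG _; rewrite pHallJ.
have [c Cc defP] := Sylow_trans syl2 syl1.
have Nxc : x * c \in 'N_G(P).
  have Gc : c \in G := subsetP sCG c Cc.
  rewrite inE groupM //=; apply/normP.
  by rewrite conjsgM -defP.
have cxc : x * c \in 'C(P) := subsetP normP_cent _ Nxc.
have e1 : a ^ (x * c) = a.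
  by apply/conjg_fixP/commgP; apply: commute_sym; apply: (centP cxc).
rewrite -[RHS]e1 conjgM.
apply/esym/conjg_fixP/commgP; apply: commute_sym; apply/cent1P.
by move: Cc; rewrite inE => /andP[].
Qed.

Lemma abA : abelian (idm P @* P).
Proof. by rewrite morphim_idm //; exact: abP. Qed.

Definition trf := transfer_morphism G abA.

Lemma trf_P g : g \in P ->
  trf g = FiniteModule.fmod abA (g ^+ #|G : P|).
Proof.
move=> Pg; have Gg : g \in G := subsetP sPG g Pg.
have trX := transversalP (rcosets_cycle_partition sPG Gg).
rewrite /trf /= (transfer_cycle_expansion sPG abA Gg trX).
rewrite -(sum_index_rcosets_cycle sPG Gg trX).
have PA : P \subset idm P @* P by rewrite morphim_idm.
rewrite (big_morph (fun n => FiniteModule.fmod abA (g ^+ n)) (id1 := 0%R) (op1 := +%R)); last first.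
- by rewrite expg0 FiniteModule.fmod1.
- move=> m n /=; rewrite expgD FiniteModule.fmodM //; apply: (subsetP PA); exact: groupX.
apply: eq_bigr => x Xx /=.
have Gx : x \in G := subsetP (transversal_sub trX) x Xx.
set n := #|<[g]> : P :* x|.
have h : (g ^+ n) ^ x^-1 \in P.
  have := mulg_exp_card_rcosets P g x; rewrite mem_rcoset.
  by rewrite conjgE invgK mulgA.
by rewrite fusion ?groupX ?groupV // -(fusion (groupX n Pg) (groupV Gx) h).
Qed.

Lemma trf_ker_TI : 'ker trf :&: P = 1.
Proof.
apply/trivgP/subsetP => g /setIP[Kg Pg]; apply/set1P.
have PA : P \subset idm P @* P by rewrite morphim_idm.
have := mker Kg; rewrite trf_P // => e.
have e2 : g ^+ #|G : P| = 1.
  apply: (injmP (FiniteModule.injm_fmod abA)); rewrite ?group1 //.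
    by apply: (subsetP PA); apply: groupX.
  by rewrite /= e FiniteModule.fmod1.
have cop : coprime #|P| #|G : P|.
  have /and3P[_ pP p'i] := sylP; exact: pnat_coprime pP p'i.
by rewrite -(expgK cop Pg) /= e2 expg1n.
Qed.

Lemma trf_card : (#|'ker trf| * #|P|)%N = #|G|.
Proof.
have sKG : 'ker trf \subset G by case/andP: (ker_normal trf).
have le1 : #|G : 'ker trf| <= #|P|.
  have := card_morphim trf G; rewrite setIid => <-.
  apply: leq_trans (max_card _) _.
  rewrite -cardsT -(card_imset _ (@FiniteModule.fmod_inj _ _ abA)).
  apply: subset_leq_card; apply/subsetP => _ /imsetP[u _ ->].
  by have := FiniteModule.fmodP u; rewrite /= morphim_idm.
have le2 : (#|'ker trf| * #|P| <= #|G|)%N.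
  rewrite -TI_cardMg ?trf_ker_TI //; apply: subset_leq_card.
  by rewrite mulG_subG sKG sPG.
apply/eqP; rewrite eqn_leq le2 /= -(Lagrange sKG) leq_mul2l le1 orbT //.
Qed.
End Burnside.

Lemma normal_pcompl (gT : finGroupType) (G P : {group gT}) p :
  prime p -> p.-Sylow(G) P -> cyclic P ->
  (forall q, prime q -> q %| #|G| -> p <= q) ->
  exists K : {group gT}, [/\ K <| G, K :&: P = 1 & (#|K| * #|P|)%N = #|G|].
Proof.
move=> pr_p sylP cycP minp.
exists ('ker (trf G cycP))%G; split.
- exact: ker_normal.
- exact: trf_ker_TI pr_p sylP cycP minp.
- exact: trf_card pr_p sylP cycP minp.
Qed.

Lemma zgroup_index (gT : finGroupType) (J : {group gT}) :
  Zgroup J -> 1 < #|J| ->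
  (exists M : {group gT}, M \subset J /\ #|J| = (pdiv #|J| * #|M|)%N) /\
  (forall M1 M2 : {group gT}, M1 \subset J -> M2 \subset J ->
     #|J| = (pdiv #|J| * #|M1|)%N -> #|J| = (pdiv #|J| * #|M2|)%N ->
     M1 :=: M2).
Proof.
move=> zJ J1; set p := pdiv #|J|.
have pr_p : prime p := pdiv_prime J1.
have minp : forall q, prime q -> q %| #|J| -> p <= q.
  by move=> q qp qd; apply: pdiv_min_dvd (prime_gt1 qp) qd.
have [P sylP] := Sylow_exists p J.
have cycP : cyclic P.
  by apply: (forall_inP zJ); apply/SylowP; exists p.
have [K [/andP[sKJ nKJ] TI cK]] := normal_pcompl pr_p sylP cycP minp.
have sPJ : P \subset J := pHall_sub sylP.
have K0 : 0 < #|K| := cardG_gt0 K.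
have iK : #|J : P| = #|K|.
  apply/eqP; rewrite -(eqn_pmul2l (cardG_gt0 P)) (Lagrange sPJ) mulnC cK //.
have Kp' : p^'.-nat #|K| by rewrite -iK; case/and3P: sylP.
have copK : coprime p #|K| by rewrite prime_coprime // -p'natE.
have pP : p %| #|P|.
  by rewrite -(Gauss_dvdr _ copK) cK pdiv_dvd.
split.
  have [g defP] := cyclicP cycP.
  have pg : p %| #[g] by rewrite /order -defP.
  have sQP : <[g ^+ p]> \subset P by rewrite defP cycle_subG mem_cycle.
  have nKQ : <[g ^+ p]> \subset 'N(K) := subset_trans (subset_trans sQP sPJ) nKJ.
  exists (K <*> <[g ^+ p]>)%G; split.
    by rewrite join_subG sKJ (subset_trans sQP sPJ).
  rewrite /= norm_joinEr // TI_cardMg; last first.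
    by apply/trivgP; rewrite -TI setIS.
  rewrite -/(order _) orderXdiv // -cK mulnCA; congr (_ * _)%N.
  by rewrite mulnC divnK // /order -defP.
have KP : K * P = J.
  apply/eqP; rewrite eqEcard mulG_subG sKJ sPJ /= TI_cardMg // cK leqnn //.
have key : forall M : {group gT}, M \subset J -> #|J| = (p * #|M|)%N ->
    K \subset M.
  move=> M sMJ cM.
  have nKM : M \subset 'N(K) := subset_trans sMJ nKJ.
  have sKMJ : K <*> M \subset J by rewrite join_subG sKJ sMJ.
  have iJM : #|J : M| = p.
    apply/eqP; rewrite -(eqn_pmul2l (cardG_gt0 M)) (Lagrange sMJ) mulnC cM //.
  have d1 : #|K <*> M : M| %| p by rewrite -iJM; apply: indexSg => //; apply: joing_subr.
  have e1 := mul_cardG K M.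
  rewrite -norm_joinEr // -(Lagrange (joing_subr K M)) -mulnA mulnC in e1.
  have e2 : #|K| = (#|K <*> M : M| * #|K :&: M|)%N.
    by apply/eqP; rewrite -(eqn_pmul2l (cardG_gt0 M)) e1 mulnA.
  have t1 : #|K <*> M : M| = 1%N.
    have : #|K <*> M : M| %| gcdn p #|K| by rewrite dvdn_gcd d1 e2 dvdn_mulr.
    by rewrite (eqP copK) dvdn1 => /eqP.
  rewrite t1 mul1n in e2.
  have E : K :&: M = K by apply/eqP; rewrite eqEcard subsetIl -e2 leqnn.
  by rewrite -E subsetIr.
have dec : forall M : {group gT}, M \subset J -> #|J| = (p * #|M|)%N ->
    M :=: K * (P :&: M) /\ #|M| = (#|K| * #|P :&: M|)%N.
  move=> M sMJ cM; have sKM := key M sMJ cM.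
  have e : K * (P :&: M) = M by rewrite group_modl // KP; apply/setIidPr.
  split; first by rewrite e.
  rewrite -{1}e TI_cardMg //; apply/trivgP; rewrite -TI setIS //; apply: subsetIl.
move=> M1 M2 s1 s2 c1 c2.
have [e1 d1] := dec M1 s1 c1; have [e2 d2] := dec M2 s2 c2.
have ee : P :&: M1 = P :&: M2.
  apply/eqP; rewrite (eq_subG_cyclic cycP (subsetIl P M1) (subsetIl P M2)).
  rewrite -(eqn_pmul2l K0) -d1 -d2 -(eqn_pmul2l (prime_gt0 pr_p)) -c1 -c2 //.
by rewrite e1 e2 ee.
Qed.



Section BraceSec.
Variables (T : finType) (B : brace T).
Local Notation GA := (brace_add B).
Local Notation GM := (brace_mul B).

Definition toA (J : {set T}) : {set GA} := [set x : GA | (x : T) \in J].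
Definition ofA (J : {set GA}) : {set T} := [set x : T | (x : GA) \in J].
Definition toM (J : {set T}) : {set GM} := [set x : GM | (x : T) \in J].

Lemma card_toA J : #|toA J| = #|J|.
Proof.
have -> : toA J = (fun x : T => (x : GA)) @: J.
  apply/setP => x; rewrite inE; apply/idP/imsetP => [Jx|[y Jy ->]] //; by exists x.
by apply: card_imset.
Qed.
Lemma card_ofA J : #|ofA J| = #|J|.
Proof.
have -> : ofA J = (fun x : GA => (x : T)) @: J.
  apply/setP => x; rewrite inE; apply/idP/imsetP => [Jx|[y Jy ->]] //; by exists x.
by apply: card_imset.
Qed.
Lemma card_toM J : #|toM J| = #|J|.
Proof.
have -> : toM J = (fun x : T => (x : GM)) @: J.
  apply/setP => x; rewrite inE; apply/idP/imsetP => [Jx|[y Jy ->]] //; by exists x.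
by apply: card_imset.
Qed.

Lemma lam_morph b : {in [set: GA] &, {morph (blambda B b : GA -> GA) : x y / x * y}}.
Proof.
move=> x y _ _ /=; rewrite /blambda.
set nb : GA := bneg B b.
set u : GA := bmul B b x; set v : GA := bmul B b y.
change (nb * bmul B b (badd B x y) = (nb * u) * (nb * v)).
rewrite bmulDr.
change (nb * (u * nb * v) = (nb * u) * (nb * v)).
by rewrite !mulgA.
Qed.

Lemma lam_inj b : injective (blambda B b).
Proof.
move=> x y; rewrite /blambda.
set nb : GA := bneg B b.
set u : GA := bmul B b x; set v : GA := bmul B b y.
change (nb * u = nb * v -> x = y).
move/mulgI; rewrite /u /v.
pose bb : GM := b; pose xx : GM := x; pose yy : GM := y.
by change (bb * xx = bb * yy -> xx = yy); move/mulgI.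
Qed.

Lemma mul_lam x y : bmul B x y = badd B x (blambda B x y).
Proof.
rewrite /blambda; set u : GA := bmul B x y.
change (u = (x : GA) * ((x : GA)^-1 * u)).
by rewrite mulKVg.
Qed.


Lemma gsA (J : {set T}) : bzero B \in J ->
  (forall x y, x \in J -> y \in J -> badd B x y \in J) -> group_set (toA J).
Proof.
move=> J0 Jadd; apply/group_setP; split; first by rewrite inE.
by move=> x y; rewrite !inE; apply: Jadd.
Qed.

Lemma gsM (J : {set T}) : bzero B \in J ->
  (forall x y, x \in J -> y \in J -> bmul B x y \in J) -> group_set (toM J).
Proof.
move=> J0 Jmul; apply/group_setP; split; first by rewrite inE.
by move=> x y; rewrite !inE; apply: Jmul.
Qed.

Hypotheses (zgA : Zgroup [set: GA]) (zgM : Zgroup [set: GM]).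

Lemma core (J : {set T}) : is_ideal B J -> 1 < #|J| ->
  exists M : {set T},
    [/\ is_ideal B M, M \subset J & #|J| = (pdiv #|J| * #|M|)%N].
Proof.
case=> [[J0 Jadd Jneg Jmul Jinv] Jnadd Jnmul Jlam] J1.
pose JA := Group (gsA J0 Jadd).
pose JM := Group (gsM J0 Jmul).
have cJA : #|JA| = #|J| := card_toA J.
have cJM : #|JM| = #|J| := card_toM J.
have zA : Zgroup JA := ZgroupS (subsetT _) zgA.
have zM : Zgroup JM := ZgroupS (subsetT _) zgM.
have J1A : 1 < #|JA| by rewrite cJA.
have J1M : 1 < #|JM| by rewrite cJM.
have [[MA [sMA cMA]] uA] := zgroup_index zA J1A.
have [_ uM] := zgroup_index zM J1M.
rewrite cJA in cMA uA; rewrite cJM in uM.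
set p := pdiv #|J| in cMA uA uM.
have JconjA : forall w y : GA, w \in JA -> w ^ y \in JA.
  move=> w y; rewrite !inE => Jw.
  have := Jnadd (bneg B y) w Jw.
  change ((y^-1 * w * y^-1^-1 : GA) \in J -> (w ^ y : GA) \in J).
  by rewrite invgK conjgE mulgA.
have JconjM : forall w y : GM, w \in JM -> w ^ y \in JM.
  move=> w y; rewrite !inE => Jw.
  have := Jnmul (binv B y) w Jw.
  change ((y^-1 * w * y^-1^-1 : GM) \in J -> (w ^ y : GM) \in J).
  by rewrite invgK conjgE mulgA.
have conjA : forall y : GA, MA :^ y = MA.
  move=> y; apply: (uA (MA :^ y)%G MA) => //=; last by rewrite cardJg.
  apply/subsetP => z; rewrite mem_conjg => /(subsetP sMA) /(JconjA _ y).
  by rewrite conjgKV.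
have lamM : forall b (x : GA), x \in MA -> (blambda B b x : GA) \in MA.
  move=> b x MAx.
  pose f := @Morphism GA GA [set: GA] (blambda B b) (lam_morph b).
  have e : f @* MA = MA.
    apply: (uA (f @* MA)%G MA) => //=.
      rewrite morphimEsub ?subsetT //; apply/subsetP => _ /imsetP[z MAz ->].
      have := subsetP sMA z MAz; rewrite !inE; exact: Jlam.
    rewrite morphimEsub ?subsetT // card_in_imset //.
    by move=> z1 z2 _ _; apply: lam_inj.
  by rewrite -e; apply: mem_morphim; rewrite ?inE.
pose M := ofA MA.
have memM : forall x, (x \in M) = ((x : GA) \in MA) by move=> x; rewrite inE.
have M0 : bzero B \in M by rewrite memM; exact: (group1 MA).
have Madd : forall x y, x \in M -> y \in M -> badd B x y \in M.
  move=> x y; rewrite !memM => Mx My.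
  by have := groupM Mx My.
have Mneg : forall x, x \in M -> bneg B x \in M.
  move=> x; rewrite !memM => Mx.
  by have := groupVr Mx.
have Mmul : forall x y, x \in M -> y \in M -> bmul B x y \in M.
  move=> x y Mx My; rewrite mul_lam; apply: Madd => //.
  by rewrite memM; apply: lamM; rewrite -memM.
pose MM := Group (gsM M0 Mmul).
have Minv : forall x, x \in M -> binv B x \in M.
  move=> x Mx; have MMx : (x : GM) \in MM by rewrite inE.
  by have := groupVr MMx; rewrite inE.
have sMJ : M \subset J.
  apply/subsetP => x; rewrite memM => /(subsetP sMA); by rewrite inE.
have cM : #|M| = #|MA| := card_ofA MA.
have cMM : #|MM| = #|M| := card_toM M.
have conjM : forall y : GM, MM :^ y = MM.
  move=> y; apply: (uM (MM :^ y)%G MM) => //=.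
  - apply/subsetP => z; rewrite mem_conjg => MMz.
    rewrite -(conjgKV y z); apply: JconjM.
    have h : (z ^ y^-1 : T) \in M by move: MMz; rewrite inE.
    by rewrite inE; exact: (subsetP sMJ _ h).
  - apply/subsetP => z; rewrite inE => h.
    by rewrite inE; exact: (subsetP sMJ _ h).
  - by rewrite cardJg cMM cM.
  - by rewrite cMM cM.
exists M; split => //; last by rewrite cM.
split.
- by split.
- move=> b x Mx; rewrite memM.
  have : (x : GA) ^ (b : GA)^-1 \in MA by rewrite -(conjA (b : GA)^-1) memJ_conjg -memM.
  by rewrite conjgE invgK mulgA.
- move=> b x Mx.
  have : (x : GM) ^ (b : GM)^-1 \in MM.
    by rewrite -(conjM (b : GM)^-1) memJ_conjg inE.
  by rewrite conjgE invgK mulgA inE.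
- move=> b x Mx; rewrite memM; apply: lamM; by rewrite -memM.
Qed.


Lemma chain n : forall J : {set T}, #|J| <= n -> is_ideal B J ->
  exists (m : nat) (I : nat -> {set T}),
    [/\ I 0%N = [set bzero B], I m = J,
        (forall i, (i <= m)%N -> is_ideal B (I i)),
        (forall i, (i < m)%N -> I i \subset I i.+1) &
        (forall i, (i < m)%N -> factor_prime (I i) (I i.+1))].
Proof.
elim: n => [|n IH] J cJ idJ.
  have [[J0 _ _ _ _] _ _ _] := idJ.
  have : 0 < #|J| by apply/card_gt0P; exists (bzero B).
  by rewrite lt0n -leqn0 cJ.
have [[J0 _ _ _ _] _ _ _] := idJ.
case: (leqP #|J| 1) => hJ.
  have eJ : J = [set bzero B].
    apply/esym/eqP; rewrite eqEcard sub1set J0 cards1 hJ //.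
  exists 0%N, (fun _ => J); split => //.
have [M [idM sMJ cJM]] := core idJ hJ.
have pp : prime (pdiv #|J|) := pdiv_prime hJ.
have M0 : 0 < #|M|.
  by have [[M0 _ _ _ _] _ _ _] := idM; apply/card_gt0P; exists (bzero B).
have ltMJ : #|M| < #|J|.
  by rewrite cJM -{1}(mul1n #|M|) ltn_pmul2r // prime_gt1.
have [m [I [I0 Im Iid Isub Ipr]]] := IH M (leq_trans ltMJ cJ) idM.
exists m.+1, (fun i => if (i <= m)%N then I i else J); split => /=.
- done.
- by rewrite ltnn.
- move=> i _; case: ifP => // /Iid //.
- move=> i lti; rewrite ltnS in lti; rewrite lti.
  case: ltngtP lti => // [lt _|-> _]; first by rewrite Isub.
  by rewrite Im.
- move=> i lti; rewrite ltnS in lti; rewrite lti.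
  case: ltngtP lti => // [lt _|-> _]; first by apply: Ipr.
  by rewrite Im /factor_prime cJM mulnK.
Qed.

End BraceSec.


End Helpers.
Import Helpers.

Theorem theorem3p8 (T : finType) (B : brace T) :
  (forall (p : nat) (P : {group brace_add B}),
      prime p -> P \in ('Syl_p([set: brace_add B]))%g -> cyclic P) ->
  (forall (p : nat) (P : {group brace_mul B}),
      prime p -> P \in ('Syl_p([set: brace_mul B]))%g -> cyclic P) ->
  supersoluble B.
Proof.
move=> hA hM.
have zgA : Zgroup [set: brace_add B].
  apply/forall_inP => V /SylowP [p pp sylV]; apply: (hA p V pp); by rewrite inE.
have zgM : Zgroup [set: brace_mul B].
  apply/forall_inP => V /SylowP [p pp sylV]; apply: (hM p V pp); by rewrite inE.
have idT : is_ideal B [set: T].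
  by split; first split; move=> *; rewrite in_setT.
have [m [I [I0 Im Iid Isub Ipr]]] := chain zgA zgM (leqnn #|[set: T]|) idT.
exists m, I; split => // i lti; right; exact: Ipr.
Qed.
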